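(* Let $R$ be a finite group, let $S\subseteq R$, and let $K,H$ be subgroups of $R$ such that (1) $1<K\trianglelefteq H<R$, (2) $K(S\setminus H)=S\setminus H=(S\setminus H)K$, and (3) $\mathrm{Aut}(R)_S=1$. Then $\mathrm{Cay}(R,S)$ is not a DRR, so $R$ is not DRR-detecting; and if moreover $S=S^{-1}$, then $\mathrm{Cay}(R,S)$ is not a GRR, so $R$ is not GRR-detecting.
   Context: For a group $R$ and $S\subseteq R$, the Cayley digraph $\mathrm{Cay}(R,S)$ has vertex set $R$ and an arc from $r$ to $sr$ whenever $s\in S$. It is a DRR if $\mathrm{Aut}(\mathrm{Cay}(R,S))$ equals the right regular representation $\hat R$, and a GRR if additionally $S=S^{-1}$. $\mathrm{Aut}(R)_S$ is the group of automorphisms of $R$ fixing $S$ setwise. $R$ is DRR-detecting if for every $S\subseteq R$, $\mathrm{Aut}(R)_S=1$ implies $\mathrm{Cay}(R,S)$ is a DRR; GRR-detecting if for every $S\subseteq R$ with $S=S^{-1}$, $\mathrm{Aut}(R)_S=1$ implies $\mathrm{Cay}(R,S)$ is a GRR. *)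

(* Defs.v *)
From mathcomp Require Import all_boot all_fingroup.
Set Implicit Arguments. Unset Strict Implicit. Unset Printing Implicit Defensive.
Import GroupScope.
Local Open Scope group_scope.

Section Cayley.
Variable gT : finGroupType.

(* Automorphisms of the Cayley digraph Cay(R,S), R = [set: gT]:
   arcs r -> s r (s in S), i.e. (x,y) is an arc iff y * x^-1 \in S. *)
Definition cay_aut (S : {set gT}) : {set {perm gT}} :=
  [set p : {perm gT} | [forall x, forall y,
     (p y * (p x)^-1 \in S) == (y * x^-1 \in S)]].

Definition right_reg : {set {perm gT}} :=
  [set p : {perm gT} | [exists g, [forall x, p x == x * g]]].

Definition is_DRR (S : {set gT}) : Prop := cay_aut S = right_reg.
Definition is_GRR (S : {set gT}) : Prop := S^-1 = S /\ is_DRR S.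

Definition Aut_fix (S : {set gT}) : {set {perm gT}} :=
  [set a in Aut [set: gT] | a @: S == S].

Definition DRR_detecting : Prop :=
  forall S : {set gT}, Aut_fix S = 1 -> is_DRR S.
Definition GRR_detecting : Prop :=
  forall S : {set gT}, S^-1 = S -> Aut_fix S = 1 -> is_GRR S.
End Cayley.

(* Main.v *)
Require Import Defs.
From mathcomp Require Import all_boot all_fingroup.
Import GroupScope.
Local Open Scope group_scope.

Lemma not_drr_aux (gT : finGroupType) (S : {set gT}) (K H : {group gT}) :
  K :!=: 1 -> K <| H -> H \proper [set: gT] ->
  K * (S :\: H) = S :\: H -> (S :\: H) * K = S :\: H -> ~ is_DRR S.
Proof.
move=> /trivgPn [k kK k1] nKH /properP [_ [z _ zH]] eL eR.
have sKH : K \subset H := normal_sub nKH.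
have kH : k \in H := subsetP sKH _ kK.
have Kc : forall h w, h \in H -> w \in K -> h * w * h^-1 \in K.
  move=> h w hH wK.
  have := memJ_norm w (subsetP (normal_norm nKH) _ (groupVr hH)).
  by rewrite /conjg invgK mulgA wK.
have auxR : forall g w, g \notin H -> w \in K -> g \in S -> g * w \in S.
  move=> g w gH wK gS.
  have : g * w \in (S :\: H) * K by apply: mem_mulg; rewrite // inE gS gH.
  by rewrite eR => /setDP [].
have auxL : forall g w, g \notin H -> w \in K -> g \in S -> w * g \in S.
  move=> g w gH wK gS.
  have : w * g \in K * (S :\: H) by apply: mem_mulg; rewrite // inE gS gH.
  by rewrite eL => /setDP [].
have R : forall g w, g \notin H -> w \in K -> (g * w \in S) = (g \in S).
  move=> g w gH wK; apply/idP/idP; last exact: auxR.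
  move=> h; rewrite -(mulgK w g); apply: auxR => //; last by rewrite groupV.
  by rewrite groupMr // (subsetP sKH).
have L : forall g w, g \notin H -> w \in K -> (w * g \in S) = (g \in S).
  move=> g w gH wK; apply/idP/idP; last exact: auxL.
  move=> h; rewrite -(mulKg w g); apply: auxL => //; last by rewrite groupV.
  by rewrite groupMl // (subsetP sKH).
pose f x := if x \in H then x * k else x.
have finj : injective f.
  move=> x y; rewrite /f; case: ifP => xH; case: ifP => yH.
  - exact: mulIg.
  - by move=> e; move: yH; rewrite -e groupMr // xH.
  - by move=> e; move: xH; rewrite e groupMr // yH.
  - by [].
pose p := perm finj.
have pa : p \in cay_aut S.
  rewrite inE; apply/forallP => x; apply/forallP => y; apply/eqP.
  rewrite !permE /f; case: ifP => yH; case: ifP => xH.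
  - by rewrite invMg mulgA mulgK.
  - have -> : y * k * x^-1 = (y * k * y^-1) * (y * x^-1).
      by rewrite !mulgA mulgKV.
    rewrite L //; first by rewrite groupMl // groupV xH.
    by apply: Kc.
  - have -> : y * (x * k)^-1 = (y * x^-1) * (x * k^-1 * x^-1).
      by rewrite invMg !mulgA mulgKV.
    rewrite R //; first by rewrite groupMr ?groupV // yH.
    by apply: Kc; rewrite // groupV.
  - by [].
move=> D; move: pa; rewrite /is_DRR in D; rewrite D inE => /existsP [g /forallP P].
have := P 1; rewrite permE /f group1 !mul1g => /eqP gk.
have := P z; rewrite permE /f (negbTE zH) => /eqP e.
by move: k1; rewrite gk; apply/negP; rewrite negbK; apply/eqP; apply: (mulgI z); rewrite mulg1 -e.
Qed.

Theorem corollary2p3 (gT : finGroupType) (S : {set gT}) (K H : {group gT}) :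
  K :!=: 1 -> K <| H -> H \proper [set: gT] ->
  K * (S :\: H) = S :\: H -> (S :\: H) * K = S :\: H ->
  Aut_fix S = 1 ->
  (~ is_DRR S /\ ~ DRR_detecting gT) /\
  (S^-1 = S -> ~ is_GRR S /\ ~ GRR_detecting gT).
Proof.
move=> K1 nKH pH eL eR A1.
have nd := @not_drr_aux gT S K H K1 nKH pH eL eR.
split; first by split => // D; apply: nd; apply: D.
move=> Si; split; first by case.
by move=> D; apply: nd; case: (D S Si A1).
Qed.
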